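(* Consider the following game over slots $1,\dots,T$ with $N\ge2$ users. The BS chooses a pmf $\mathbf p=(p_1,\dots,p_N)$ and in every slot, independently, schedules user $i$ with probability $p_i$. The adversary chooses a blocking matrix $\sigma\in\{0,1\}^{N\times T}$, where $\sigma_i(t)=0$ means user $i$ is blocked in slot $t$. Feasibility means $\sum_{i,t}(1-\sigma_i(t))\le\alpha T$ and at most one user is blocked per slot, where $0<\alpha<1$. Ages satisfy $a_i(1)=1$ and $a_i(t+1)=1$ if user $i$ is scheduled and not blocked in slot $t$, and $a_i(t+1)=a_i(t)+1$ otherwise. The payoff is $\Delta^{\mathbf p,\sigma}=\frac1T\sum_{t=1}^T\frac1N\sum_i\mathbb E[a_i(t)]$; the BS minimizes it and the adversary maximizes it. Then, for all sufficiently large $T$ with $\alpha T\in\mathbb Z$, this game has no Nash equilibrium. That is, there is no pair $(\bar{\mathbf p},\bar\sigma)$ with $\Delta^{\bar{\mathbf p},\bar\sigma}\le\Delta^{\mathbf p,\bar\sigma}$ for all pmfs $\mathbf p$ and $\Delta^{\bar{\mathbf p},\bar\sigma}\ge\Delta^{\bar{\mathbf p},\sigma}$ for all feasible $\sigma$. *)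

(* Defs.v *)
From HB Require Import structures.
From mathcomp Require Import all_boot all_order all_algebra.
From mathcomp Require Import reals.
Set Implicit Arguments. Unset Strict Implicit. Unset Printing Implicit Defensive.
Import Order.TTheory GRing.Theory Num.Theory.
Local Open Scope ring_scope.

(* Users are indexed by 'I_N, slots by 'I_T (slot t+1 of the paper is the
   ordinal t).  A blocking matrix sig : 'M[bool]_(N,T) has
   sig i t = true  <-> sigma_i(t) = 1 (not blocked),
   sig i t = false <-> sigma_i(t) = 0 (user i blocked in slot t). *)

Section Game.
Variables (R : realType) (N T : nat).

Definition is_pmf (p : 'I_N -> R) : Prop :=
  (forall i, 0 <= p i) /\ \sum_(i < N) p i = 1.

Definition feasible (alpha : R) (sig : 'M[bool]_(N, T)) : Prop :=
  ((\sum_(i < N) \sum_(t < T) (~~ sig i t : nat))%N%:R <= alpha * T%:R) /\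
  (forall t : 'I_T, #|[set i : 'I_N | ~~ sig i t]| <= 1)%N.

(* A realisation of the BS's random schedule: sch t is the user scheduled
   in slot t. Its probability under the iid pmf p. *)
Definition sched_prob (p : 'I_N -> R) (sch : {ffun 'I_T -> 'I_N}) : R :=
  \prod_(t < T) p (sch t).

Definition reset (sig : 'M[bool]_(N, T)) (sch : {ffun 'I_T -> 'I_N})
  (i : 'I_N) (k : nat) : bool :=
  match (insub k : option 'I_T) with
  | Some t => (sch t == i) && sig i t
  | None => false
  end.

(* age sig sch i k = a_i(k+1): a_i(1) = 1, a_i(t+1) = 1 on reset in slot t,
   a_i(t) + 1 otherwise *)
Fixpoint age (sig : 'M[bool]_(N, T)) (sch : {ffun 'I_T -> 'I_N})
  (i : 'I_N) (k : nat) : nat :=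
  match k with
  | 0 => 1
  | k'.+1 => if reset sig sch i k' then 1 else (age sig sch i k').+1
  end.

Definition exp_age (p : 'I_N -> R) (sig : 'M[bool]_(N, T)) (i : 'I_N)
  (k : nat) : R :=
  \sum_(sch : {ffun 'I_T -> 'I_N}) sched_prob p sch * (age sig sch i k)%:R.

Definition payoff (p : 'I_N -> R) (sig : 'M[bool]_(N, T)) : R :=
  T%:R^-1 * \sum_(t < T) (N%:R^-1 * \sum_(i < N) exp_age p sig i t).

Definition nash_eq (alpha : R) (pb : 'I_N -> R) (sb : 'M[bool]_(N, T)) : Prop :=
  is_pmf pb /\ feasible alpha sb /\
  (forall p, is_pmf p -> payoff pb sb <= payoff p sb) /\
  (forall sig, feasible alpha sig -> payoff pb sig <= payoff pb sb).

End Game.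

(* Main.v *)
Require Import Defs.
From HB Require Import structures.
From mathcomp Require Import all_boot all_order all_algebra.
From mathcomp Require Import reals.
From mathcomp Require Import ring lra zify.
Import Order.TTheory GRing.Theory Num.Theory.
Local Open Scope ring_scope.

Set Implicit Arguments. Unset Strict Implicit. Unset Printing Implicit Defensive.

Section SeqA.
Variable R : realType.

Fixpoint Sq (w : nat -> R) (k : nat) : R :=
  if k is k'.+1 then 1 + w k' * Sq w k' else 1.

Definition wb (y : R) (ub : nat -> bool) (t : nat) : R := if ub t then y else 1.

Definition Z (y : R) k := Sq (fun _ => y) k.

Lemma Z_closed y k : (1 - y) * Z y k = 1 - y ^+ k.+1.
Proof.
elim: k => [|k IH]; first by rewrite /Z /= mulr1 expr1.
have -> : Z y k.+1 = 1 + y * Z y k by [].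
rewrite mulrDr mulr1 mulrCA IH !exprS; ring.
Qed.

Lemma Z_bounds y k : 0 <= y < 1 -> 0 <= Z y k /\ (1 - y) * Z y k <= 1.
Proof.
move=> /andP[y0 y1].
have ey : 0 <= y ^+ k.+1 <= 1 by rewrite exprn_ge0 //= exprn_ile1 // ltW.
have := Z_closed y k; move: ey => /andP[e0 e1] H.
split; last by rewrite H; lra.
have : 0 <= (1 - y) * Z y k by rewrite H; lra.
by rewrite pmulr_rge0 // subr_gt0.
Qed.

Definition dd y ub n := Sq (wb y ub) n - Z y n.

Lemma dd0 y ub : dd y ub 0 = 0.
Proof. by rewrite /dd /Z /= subrr. Qed.

Lemma dd_S y ub n : dd y ub n.+1 =
  if ub n then y * dd y ub n else dd y ub n + (1 - y ^+ n.+1).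
Proof.
rewrite /dd /= -Z_closed /wb /Z /=; case: (ub n); ring.
Qed.

Definition cnt (ub : nat -> bool) n := (\sum_(t < n) ~~ ub t)%N.

Lemma cnt_S ub n : cnt ub n.+1 = (cnt ub n + ~~ ub n)%N.
Proof. by rewrite /cnt big_ord_recr. Qed.

Lemma dd_bounds y ub n : 0 <= y < 1 -> 0 <= dd y ub n <= (cnt ub n)%:R.
Proof.
move=> /andP[y0 y1].
have ey : forall m, 0 <= y ^+ m <= 1.
  by move=> m; rewrite exprn_ge0 //= exprn_ile1 // ltW.
elim: n => [|n IH]; first by rewrite dd0 /cnt big_ord0 lexx.
rewrite dd_S cnt_S natrD; move: IH => /andP[h0 h1].
have := ey n.+1 => /andP[e0 e1].
case: (ub n) => /=; rewrite ?addr0.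
  apply/andP; split; first exact: mulr_ge0.
  apply: le_trans h1; rewrite ler_piMl //; lra.
apply/andP; split; lra.
Qed.

Definition Phi y ub n := \sum_(k < n) dd y ub k + dd y ub n / (1 - y).

Lemma Phi_S y ub n : y != 1 ->
  Phi y ub n.+1 = Phi y ub n + (if ub n then 0 else dd y ub n + Z y n).
Proof.
move=> y1; have y1' : 1 - y != 0 by rewrite subr_eq0 eq_sym.
rewrite /Phi big_ord_recr /= dd_S -Z_closed.
by case: (ub n) => /=; field.
Qed.

Lemma Phi0 y ub : Phi y ub 0 = 0.
Proof. by rewrite /Phi big_ord0 dd0 mul0r addr0. Qed.

Lemma Phi_up y ub n : 0 <= y < 1 ->
  Phi y ub n * 2 <= (cnt ub n)%:R * 2 / (1 - y) + (cnt ub n)%:R * ((cnt ub n)%:R - 1).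
Proof.
move=> yb; have /andP[y0 y1] := yb.
have y1' : y != 1 by rewrite lt_eqF.
have iy : 0 < 1 - y by rewrite subr_gt0.
elim: n => [|n IH]; first by rewrite Phi0 /cnt big_ord0 mul0r !mul0r add0r.
rewrite Phi_S // cnt_S natrD.
case: (ub n) => /=; rewrite ?addr0 ?addn0 ?addr0 //.
have /andP[_ hd] := @dd_bounds y ub n yb.
have [_ hz] := @Z_bounds y n yb.
have hz' : Z y n <= 1 / (1 - y) by rewrite ler_pdivlMr // mulrC.
set c := (cnt ub n)%:R in IH hd *.
have -> : (c + 1) * 2 / (1 - y) + (c + 1) * (c + 1 - 1) =
   (c * 2 / (1 - y) + c * (c - 1)) + 2 * (1 / (1 - y)) + 2 * c.
  by field; rewrite subr_eq0 eq_sym.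
lra.
Qed.

Lemma Gam_up y ub n : 0 <= y < 1 ->
  (\sum_(k < n) dd y ub k) * 2 <=
   (cnt ub n)%:R * 2 / (1 - y) + (cnt ub n)%:R * ((cnt ub n)%:R - 1).
Proof.
move=> yb; have H := @Phi_up y ub n yb.
have /andP[y0 y1] := yb.
have /andP[h0 _] := @dd_bounds y ub n yb.
have : 0 <= dd y ub n / (1 - y) by rewrite divr_ge0 // subr_ge0 ltW.
move: H; rewrite /Phi; lra.
Qed.

End SeqA.

Section SeqB.
Variable R : realType.

Definition ucnt (ub : nat -> bool) n := (\sum_(t < n) ub t)%N.

Lemma ucnt_S ub n : ucnt ub n.+1 = (ucnt ub n + ub n)%N.
Proof. by rewrite /ucnt big_ord_recr. Qed.

Lemma Sq_ge1 (y : R) ub k : 0 <= y -> 1 <= Sq (wb y ub) k.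
Proof.
move=> y0; elim: k => [|k IH] /=; first exact: lexx.
rewrite lerDl /wb; case: (ub k); apply: mulr_ge0 => //; lra.
Qed.

Lemma Sq_mono (a b : R) ub k : 0 <= a -> a <= b -> Sq (wb a ub) k <= Sq (wb b ub) k.
Proof.
move=> a0 ab; elim: k => [|k IH] /=; first exact: lexx.
rewrite lerD2l /wb; case: (ub k); last by rewrite !mul1r.
have h1 := Sq_ge1 ub k a0.
apply: (le_trans (ler_wpM2l a0 IH)); apply: ler_wpM2r => //; lra.
Qed.

Lemma Sq_smono (a b : R) ub k : 0 <= a -> a < b -> (1 <= ucnt ub k)%N ->
  Sq (wb a ub) k < Sq (wb b ub) k.
Proof.
move=> a0 ab; elim: k => [|k IH] /=; first by rewrite /ucnt big_ord0.
rewrite ucnt_S ltrD2l /wb; case E: (ub k) => /= Hc.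
  have h1 := Sq_ge1 ub k a0.
  have b0 : 0 <= b by lra.
  have h2 := Sq_ge1 ub k b0.
  have := Sq_mono ub k a0 (ltW ab).
  rewrite /wb => hm.
  apply: (le_lt_trans (ler_wpM2l a0 hm)); rewrite ltr_pM2r //; lra.
by rewrite !mul1r; apply: IH; rewrite addn0 in Hc.
Qed.

Lemma Sq_conv (a b : R) ub k : 0 <= a -> 0 <= b ->
  Sq (wb ((a + b) / 2) ub) k * 2 <= Sq (wb a ub) k + Sq (wb b ub) k.
Proof.
move=> a0 b0; elim: k => [|k IH] /=; first by lra.
rewrite /wb; case: (ub k); last by rewrite !mul1r; lra.
set m := (a + b) / 2 in IH *.
set Sm := Sq (wb m ub) k in IH *.
set Sa := Sq (wb a ub) k in IH *.
set Sb := Sq (wb b ub) k in IH *.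
have m0 : 0 <= m by rewrite /m; apply: divr_ge0 => //; lra.
have H1 : m * Sm * 2 <= m * (Sa + Sb) by rewrite -mulrA ler_wpM2l.
have H2 : 0 <= (a - b) * (Sa - Sb).
  case: (leP a b) => hab.
    have := Sq_mono ub k a0 hab; rewrite -/Sa -/Sb => h.
    by apply: mulr_le0; lra.
  have := Sq_mono ub k b0 (ltW hab); rewrite -/Sa -/Sb => h.
  by apply: mulr_ge0; lra.
have Hm : m * 2 = a + b by rewrite /m; field.
have : m * (Sa + Sb) * 2 = (a + b) * (Sa + Sb) by rewrite -Hm; ring.
nra.
Qed.

Lemma Sq_sconv (a b : R) ub k : 0 <= a -> 0 <= b -> a != b -> (2 <= ucnt ub k)%N ->
  Sq (wb ((a + b) / 2) ub) k * 2 < Sq (wb a ub) k + Sq (wb b ub) k.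
Proof.
move=> a0 b0 ab; elim: k => [|k IH] /=; first by rewrite /ucnt big_ord0.
rewrite ucnt_S /wb; case E: (ub k) => /= Hc; last first.
  by rewrite !mul1r; rewrite addn0 in Hc; have := IH Hc; lra.
have Hc1 : (1 <= ucnt ub k)%N by rewrite addn1 ltnS in Hc.
set m := (a + b) / 2 in IH *.
set Sm := Sq (wb m ub) k in IH *.
set Sa := Sq (wb a ub) k in IH *.
set Sb := Sq (wb b ub) k in IH *.
have m0 : 0 <= m by rewrite /m; apply: divr_ge0 => //; lra.
have H1 : m * Sm * 2 <= m * (Sa + Sb).
  by rewrite -mulrA ler_wpM2l // Sq_conv.
have H2 : 0 < (a - b) * (Sa - Sb).
  case: (ltgtP a b) => hab.
  - have := Sq_smono a0 hab Hc1; rewrite -/Sa -/Sb => h.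
    by rewrite nmulr_rgt0; lra.
  - have := Sq_smono b0 hab Hc1; rewrite -/Sa -/Sb => h.
    by apply: mulr_gt0; lra.
  - by rewrite hab eqxx in ab.
have Hm : m * 2 = a + b by rewrite /m; field.
have : m * (Sa + Sb) * 2 = (a + b) * (Sa + Sb) by rewrite -Hm; ring.
nra.
Qed.

End SeqB.

Section SeqC.
Variable R : realType.

Lemma Gam_mid (y : R) ub s K M : 0 <= y < 1 -> (s + K <= M)%N -> (s.+1 <= M - s - K)%N ->
  (forall t, (t < M)%N -> ub t = ~~ ((s <= t) && (t < s + K))%N) ->
  K%:R * (K%:R - 1) + K%:R * 2 / (1 - y) - K%:R * 6 * y ^+ s.+1 / (1 - y)
    <= (\sum_(k < M) dd y ub k) * 2.
Proof.
move=> yb sKM sM Hub; have /andP[y0 y1] := yb.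
have y1' : y != 1 by rewrite lt_eqF.
have iy : 0 < 1 - y by rewrite subr_gt0.
set e := y ^+ s.+1.
have e0 : 0 <= e by rewrite exprn_ge0.
have ey : forall m, 0 <= y ^+ m <= 1.
  by move=> m; rewrite exprn_ge0 //= exprn_ile1 // ltW.
have P1 : forall n, (n <= s)%N -> dd y ub n = 0 /\ Phi y ub n = 0.
  elim=> [|n IH] hn; first by rewrite dd0 Phi0.
  have hn' : (n <= s)%N by apply: ltnW.
  have ubn : ub n by rewrite Hub; [rewrite leqNgt hn | lia].
  have [IH1 IH2] := IH hn'.
  by rewrite dd_S Phi_S // ubn IH1 IH2 mulr0 addr0.
have [d0 Ph0] := P1 s (leqnn s).
have blk : forall i, (i < K)%N -> ub (s + i) = false.
  move=> i hi; rewrite Hub; [apply/negPn/andP; split; lia | lia].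
have D2 : forall i, (i <= K)%N ->
   dd y ub (s + i) * (1 - y) >= i%:R * (1 - y) - e * (1 - y ^+ i) /\
   dd y ub (s + i) <= i%:R.
  elim=> [|i IH] hi; first by rewrite addn0 d0 expr0 subrr !mulr0 mul0r subrr lexx.
  have [IH1 IH2] := IH (ltnW hi).
  have Ey : y ^+ (s + i).+1 = e * y ^+ i by rewrite /e -exprD addSn.
  rewrite addnS dd_S blk // Ey exprSr -[i.+1]addn1 natrD.
  have := ey i => /andP[ei0 ei1].
  split; first lra.
  have : 0 <= e * y ^+ i by apply: mulr_ge0.
  lra.
have D2' : forall i, (i <= K)%N -> dd y ub (s + i) >= i%:R - e / (1 - y).
  move=> i hi; have [h _] := D2 i hi.
  have := ey i => /andP[ei0 ei1].
  have h2 : 0 <= e * y ^+ i by apply: mulr_ge0.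
  rewrite -(ler_pM2r iy).
  have -> : (i%:R - e / (1 - y)) * (1 - y) = i%:R * (1 - y) - e.
    by field; rewrite subr_eq0 eq_sym.
  lra.
have P2 : forall i, (i <= K)%N ->
   Phi y ub (s + i) * 2 >= i%:R * (i%:R - 1) + i%:R * 2 * (1 - 2 * e) / (1 - y).
  elim=> [|i IH] hi; first by rewrite addn0 Ph0; lra.
  have := IH (ltnW hi) => IH1.
  rewrite addnS Phi_S // blk //.
  have hz : Z y (s + i) >= (1 - e) / (1 - y).
    rewrite ler_pdivrMr // mulrC Z_closed lerD2l lerN2 -addSn exprD -/e.
    have := ey i => /andP[ei0 ei1].
    by rewrite ler_piMr.
  have hd := D2' i (ltnW hi).
  set w := 1 / (1 - y) in hz hd.
  have Ew : forall x, x / (1 - y) = x * w by move=> x; rewrite /w mul1r.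
  rewrite Ew in hz; rewrite Ew in hd; rewrite Ew in IH1; rewrite Ew -[i.+1]addn1 natrD.
  lra.
have P3 : forall j, (s + K + j <= M)%N ->
   dd y ub (s + K + j) = y ^+ j * dd y ub (s + K) /\ Phi y ub (s + K + j) = Phi y ub (s + K).
  elim=> [|j IH] hj; first by rewrite addn0 expr0 mul1r.
  have [IH1 IH2] := IH ltac:(lia).
  have ubn : ub (s + K + j).
    rewrite Hub; [apply/negP => /andP[_ h]; lia | lia].
  by rewrite addnS dd_S Phi_S // ubn IH1 IH2 addr0 exprS mulrA.
have HM : M = (s + K + (M - s - K))%N by lia.
have [P31 P32] := P3 (M - s - K)%N ltac:(lia).
rewrite -HM in P31 P32.
have hP := P2 K (leqnn K); rewrite -P32 in hP.
have [_ hdK] := D2 K (leqnn K).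
have hdK0 : 0 <= dd y ub (s + K).
  by have /andP[] := @dd_bounds _ y ub (s + K) yb.
have hyM : y ^+ (M - s - K) <= e by rewrite /e ler_wiXn2l // ltW.
have hdM : dd y ub M <= K%:R * e.
  rewrite P31 mulrC; apply: ler_pM => //; rewrite exprn_ge0 //.
have hdM' : dd y ub M / (1 - y) <= K%:R * e / (1 - y).
  by rewrite ler_pM2r // invr_gt0.
have HS : \sum_(k < M) dd y ub k = Phi y ub M - dd y ub M / (1 - y).
  by rewrite /Phi addrK.
rewrite HS.
set w := 1 / (1 - y) in hP hdM' *.
have Ew : forall x, x / (1 - y) = x * w by move=> x; rewrite /w mul1r.
rewrite Ew in hP; rewrite !Ew in hdM'; rewrite !Ew.
lra.
Qed.

End SeqC.

Section Link.
Variables (R : realType) (N T : nat).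

Definition ubf (r : 'I_T -> bool) (t : nat) : bool :=
  if (insub t : option 'I_T) is Some t' then r t' else false.
Definition wf (y : R) r := wb y (ubf r).
Definition Fu (y : R) r := \sum_(k < T) Sq (wf y r) k.

Definition W (w : nat -> R) k := \sum_(j < k.+1) \prod_(t < k | (k - j <= t)%N) w t.

Lemma W_S w k : W w k.+1 = 1 + w k * W w k.
Proof.
rewrite /W big_ord_recl /=.
rewrite big1 => [|t]; last by rewrite subn0 leqNgt ltn_ord.
congr (_ + _); rewrite mulr_sumr; apply: eq_bigr => j _.
rewrite /bump leq0n add1n big_mkcond big_ord_recr /= subSS leq_subr mulrC -big_mkcond; congr (_ * _).
Qed.

Lemma W_Sq w k : W w k = Sq w k.
Proof.
elim: k => [|k IH]; last by rewrite W_S IH.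
by rewrite /W big_ord_recl big_ord0 big_ord0 addr0.
Qed.

Lemma age_Sq (sig : 'M[bool]_(N, T)) (sch : {ffun 'I_T -> 'I_N}) (i : 'I_N) k :
  (age sig sch i k)%:R = Sq (fun t => ((~~ reset sig sch i t) : nat)%:R : R) k.
Proof.
elim: k => [|k IH] //=.
case: (reset sig sch i k) => /=; first by rewrite mul0r addr0.
by rewrite mul1r -IH -natr1 addrC.
Qed.

Lemma reset_val (sig : 'M[bool]_(N, T)) (sch : {ffun 'I_T -> 'I_N}) (i : 'I_N) (t : 'I_T) :
  reset sig sch i t = (sch t == i) && sig i t.
Proof. by rewrite /reset valK. Qed.

Lemma wf_val y r (t : 'I_T) : wf y r t = if r t then y else 1.
Proof. by rewrite /wf /wb /ubf valK. Qed.

Lemma exp_age_Sq (p : 'I_N -> R) sig i k : is_pmf p -> (k <= T)%N ->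
  exp_age p sig i k = Sq (wf (1 - p i) (fun t => sig i t)) k.
Proof.
move=> [p0 p1] kT.
rewrite /exp_age -W_Sq /W.
under eq_bigr => sch _ do rewrite age_Sq -W_Sq /W mulr_sumr.
rewrite exchange_big /=; apply: eq_bigr => j _.
have conv : forall F : nat -> R, \prod_(t < k | (k - j <= t)%N) F t =
    \prod_(t : 'I_T) (if (k - j <= t < k)%N then F t else 1).
  by move=> F; rewrite (big_ord_widen_cond _ _ _ kT) big_mkcond.
rewrite conv.
under eq_bigr => sch _ do rewrite (conv (fun t => ((~~ reset sig sch i t) : nat)%:R)) /sched_prob -big_split /=.
under eq_bigr => sch _ do under eq_bigr => t _ do rewrite reset_val.
rewrite -(bigA_distr_bigA (fun (t : 'I_T) (n : 'I_N) =>
   p n * (if (k - j <= t < k)%N then ((~~ ((n == i) && sig i t)) : nat)%:R else 1))) /=.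
apply: eq_bigr => t _; rewrite wf_val.
case: ifP => _; last by under eq_bigr => n _ do rewrite mulr1.
case: (sig i t) => /=; last first.
  by under eq_bigr => n _ do rewrite andbF mulr1.
under eq_bigr => n _ do rewrite andbT.
rewrite (bigD1 i) //= eqxx mulr0 add0r.
rewrite (bigD1 i) //= in p1.
have -> : \sum_(n < N | n != i) p n * ((~~ (n == i)) : nat)%:R = \sum_(n < N | n != i) p n.
  by apply: eq_bigr => n /negbTE ->; rewrite mulr1.
by rewrite -p1 addrC addrK.
Qed.

End Link.

Section Link2.
Variables (R : realType) (N T : nat).

Lemma payoff_Fu (p : 'I_N -> R) (sig : 'M[bool]_(N, T)) : is_pmf p ->
  payoff p sig = (T%:R^-1 * N%:R^-1) * \sum_(i < N) Fu (1 - p i) (fun t => sig i t).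
Proof.
move=> pp; rewrite /payoff /Fu -mulrA; congr (_ * _).
rewrite -mulr_sumr; congr (_ * _); rewrite exchange_big /=.
apply: eq_bigr => i _; apply: eq_bigr => t _.
by rewrite exp_age_Sq // ltnW.
Qed.

Lemma Sq_ext (w1 w2 : nat -> R) k : (forall t, (t < k)%N -> w1 t = w2 t) -> Sq w1 k = Sq w2 k.
Proof.
elim: k => [|k IH] H //=; rewrite H // IH // => t tk; apply: H; exact: ltnW.
Qed.

Lemma Fu_ext (y : R) (r1 r2 : 'I_T -> bool) : (forall t, r1 t = r2 t) -> Fu y r1 = Fu y r2.
Proof.
move=> H; apply: eq_bigr => k _; apply: Sq_ext => t _.
by rewrite /wf /wb /ubf; case: (insub t) => // t'; rewrite H.
Qed.

Definition EE (y : R) := Fu y (fun _ : 'I_T => true).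

Lemma EE_Z (y : R) : EE y = \sum_(k < T) Z y k.
Proof.
apply: eq_bigr => k _; apply: Sq_ext => t tk.
rewrite /wf /wb /ubf insubT //; exact: (ltn_trans tk).
Qed.

Lemma Fu_gam (y : R) (r : 'I_T -> bool) : Fu y r - EE y = \sum_(k < T) dd y (ubf r) k.
Proof.
rewrite EE_Z /Fu -sumrB; apply: eq_bigr => k _; rewrite /dd; congr (_ - _).
Qed.

Lemma cnt_T (r : 'I_T -> bool) : cnt (ubf r) T = (\sum_(t < T) ~~ r t)%N.
Proof. by apply: eq_bigr => t _; rewrite /ubf valK. Qed.

Lemma ucnt_cnt ub n : (ucnt ub n + cnt ub n)%N = n.
Proof.
elim: n => [|n IH]; first by rewrite /ucnt /cnt !big_ord0.
by rewrite ucnt_S cnt_S; case: (ub n) => /=; lia.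
Qed.

Lemma cnt_mono ub n m : (n <= m)%N -> (cnt ub n <= cnt ub m)%N.
Proof.
elim: m => [|m IH]; first by rewrite leqn0 => /eqP ->.
rewrite leq_eqVlt => /orP[/eqP -> //|]; rewrite ltnS => /IH h.
rewrite cnt_S; lia.
Qed.

Lemma Fu_conv (a b : R) (r : 'I_T -> bool) : 0 <= a -> 0 <= b ->
  Fu ((a + b) / 2) r * 2 <= Fu a r + Fu b r.
Proof.
move=> a0 b0; rewrite /Fu mulr_suml -big_split /=.
by apply: ler_sum => k _; apply: Sq_conv.
Qed.

Lemma Fu_sconv (a b : R) (r : 'I_T -> bool) : 0 <= a -> 0 <= b -> a != b ->
  (2 <= ucnt (ubf r) T.-1)%N -> (0 < T)%N ->
  Fu ((a + b) / 2) r * 2 < Fu a r + Fu b r.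
Proof.
move=> a0 b0 ab hc T0; rewrite /Fu mulr_suml -big_split /=.
have E : forall F : nat -> R, \sum_(k < T) F k = \sum_(k < T.-1) F k + F T.-1.
  by move=> F; rewrite -(big_mkord xpredT F) -(big_mkord xpredT F) -big_nat_recr //= prednK.
rewrite (E (fun k => Sq (wf ((a + b) / 2) r) k * 2)) (E (fun k => Sq (wf a r) k + Sq (wf b r) k)) /=.
apply: ler_ltD; first by apply: ler_sum => k _; apply: Sq_conv.
by rewrite /wf; apply: Sq_sconv.
Qed.

Lemma EE_bounds (y : R) : 0 <= y < 1 ->
  (1 - y) * EE y <= T%:R /\ T%:R - 1 / (1 - y) <= (1 - y) * EE y.
Proof.
move=> /andP[y0 y1]; have iy : 0 < 1 - y by rewrite subr_gt0.
rewrite EE_Z mulr_sumr.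
under eq_bigr => k _ do rewrite Z_closed.
rewrite sumrB sumr_const card_ord.
have hs : 0 <= \sum_(k < T) y ^+ k.+1 by apply: sumr_ge0 => k _; rewrite exprn_ge0.
split; first lra.
have : (1 - y) * \sum_(k < T) y ^+ k.+1 <= 1.
  have H := subrX1 y T.
  have -> : \sum_(k < T) y ^+ k.+1 = y * \sum_(k < T) y ^+ k.
    by rewrite mulr_sumr; apply: eq_bigr => k _; rewrite exprS.
  have -> : (1 - y) * (y * \sum_(i < T) y ^+ i) = y * (1 - y ^+ T).
    by rewrite mulrCA -[1 - y]opprB mulNr -H; ring.
  have := exprn_ge0 T y0; have: y ^+ T <= 1 by rewrite exprn_ile1 // ltW.
  nra.
move=> h; rewrite -(ler_pM2l iy) mulrBr mulrCA mulfV ?mulr1; last by rewrite gt_eqF.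
have : (1 - y) * (1 / (1 - y)) = 1 by rewrite mul1r mulfV // gt_eqF.
nra.
Qed.

End Link2.

Lemma bernoulli (R : realType) (n : R) m : 1 <= n ->
  (1 - n^-1) ^+ m * (n - 1 + m%:R) <= n - 1.
Proof.
move=> n1; have n0 : 0 < n by lra.
have y0 : 0 <= 1 - n^-1 by rewrite subr_ge0 invf_le1.
have y1 : 1 - n^-1 <= 1 by rewrite lerBlDr lerDl invr_ge0 ltW.
elim: m => [|m IH]; first by rewrite expr0 mul1r addr0.
rewrite exprS -mulrA -natr1.
have hm : 0 <= (1 - n^-1) ^+ m <= 1 by rewrite exprn_ge0 //= exprn_ile1.
have -> : (1 - n^-1) ^+ m * (n - 1 + (m%:R + 1)) =
   (1 - n^-1) ^+ m * (n - 1 + m%:R) + (1 - n^-1) ^+ m by ring.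
apply: (le_trans (ler_wpM2l y0 (lerD IH (proj2 (andP hm))))).
rewrite subrK mulrBl mul1r mulVf ?gt_eqF //.
Qed.

Section Unif.
Variables (R : realType) (N T : nat) (alpha : R).

Lemma pmf_le1 (p : 'I_N -> R) : is_pmf p -> forall i, p i <= 1.
Proof.
move=> [p0 p1] i; rewrite -p1 (bigD1 i) //= lerDl.
by apply: sumr_ge0 => l _.
Qed.

Definition swp (i j l : 'I_N) := if l == i then j else if l == j then i else l.

Lemma swpK i j : involutive (swp i j).
Proof.
move=> l; rewrite /swp.
case: (eqVneq l i) => [->|li]; first by rewrite eqxx; case: (eqVneq j i) => [->|]//; rewrite eqxx.
case: (eqVneq l j) => [->|lj]; first by rewrite eqxx.
by rewrite (negbTE li) (negbTE lj).
Qed.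

Definition swmx i j (sb : 'M[bool]_(N, T)) : 'M[bool]_(N, T) := \matrix_(l, t) sb (swp i j l) t.

Lemma tot_swap i j (sb : 'M[bool]_(N, T)) :
  (\sum_(l < N) \sum_(t < T) (~~ swmx i j sb l t : nat))%N =
  (\sum_(l < N) \sum_(t < T) (~~ sb l t : nat))%N.
Proof.
rewrite [RHS](reindex_inj (inv_inj (swpK i j))) /=.
by apply: eq_bigr => l _; apply: eq_bigr => t _; rewrite mxE.
Qed.

Lemma feasible_swap i j (sb : 'M[bool]_(N, T)) :
  feasible alpha sb -> feasible alpha (swmx i j sb).
Proof.
move=> [h1 h2]; split; first by rewrite tot_swap.
move=> t.
have -> : [set l | ~~ swmx i j sb l t] = swp i j @^-1: [set l : 'I_N | ~~ sb l t].
  by apply/setP => l; rewrite !inE mxE.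
by rewrite card_preimset ?h2 //; exact: inv_inj (swpK i j).
Qed.

Lemma pmf_swap i j (p : 'I_N -> R) : is_pmf p -> is_pmf (fun l => p (swp i j l)).
Proof.
move=> [p0 p1]; split => // ; rewrite -p1.
by rewrite [RHS](reindex_inj (inv_inj (swpK i j))).
Qed.

Lemma payoff_swap i j (p : 'I_N -> R) (sb : 'M[bool]_(N, T)) : is_pmf p ->
  payoff (fun l => p (swp i j l)) sb = payoff p (swmx i j sb).
Proof.
move=> pp; rewrite !payoff_Fu //; last exact: pmf_swap.
congr (_ * _).
rewrite [RHS](reindex_inj (inv_inj (swpK i j))) /=.
apply: eq_bigr => l _; apply: Fu_ext => t; rewrite mxE swpK //.
Qed.

Lemma row_le_tot (sb : 'M[bool]_(N, T)) (k : nat) l :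
  alpha * T%:R = k%:R -> feasible alpha sb ->
  (\sum_(t < T) (~~ sb l t : nat) <= k)%N.
Proof.
move=> hk [h1 _]; rewrite hk ler_nat in h1.
apply: leq_trans h1; rewrite (bigD1 l) //=; exact: leq_addr.
Qed.

Lemma ucnt_row (sb : 'M[bool]_(N, T)) (k : nat) l :
  alpha * T%:R = k%:R -> feasible alpha sb -> (k + 3 <= T)%N ->
  (2 <= ucnt (ubf (fun t => sb l t)) T.-1)%N.
Proof.
move=> hk hf hT.
have h1 := row_le_tot l hk hf.
have h2 := ucnt_cnt (ubf (fun t => sb l t)) T.-1.
have h3 := @cnt_mono (ubf (fun t => sb l t)) T.-1 T (leq_pred T).
rewrite cnt_T in h3.
lia.
Qed.

Lemma uniform_NE (pb : 'I_N -> R) (sb : 'M[bool]_(N, T)) (k : nat) :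
  alpha * T%:R = k%:R -> (k + 3 <= T)%N -> (0 < N)%N ->
  nash_eq alpha pb sb -> forall i j, pb i = pb j.
Proof.
move=> hk hT N0 [pp [hf [BR AR]]] i j.
apply/eqP; apply: contraT => hij.
set pt := fun l => pb (swp i j l).
have ppt : is_pmf pt by apply: pmf_swap.
set pm := fun l => (pb l + pt l) / 2.
have ppm : is_pmf pm.
  case: pp => [p0 p1]; case: ppt => [q0 q1]; split.
    by move=> l; rewrite /pm; apply: divr_ge0; [apply: addr_ge0|].
  by rewrite /pm -mulr_suml big_split /= p1 q1; field.
have H1 := BR _ ppm.
have H2 : payoff pt sb <= payoff pb sb.
  by rewrite /pt payoff_swap //; apply: AR; apply: feasible_swap.
have H3 : payoff pm sb * 2 < payoff pb sb + payoff pt sb.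
  rewrite !payoff_Fu //.
  set c := (T%:R^-1 * N%:R^-1 : R).
  have c0 : 0 < c.
    have T0 : (0 < T)%N by lia.
    by apply: mulr_gt0; rewrite invr_gt0 ltr0n.
  rewrite -mulrA -mulrDr ltr_pM2l // mulr_suml -big_split /=.
  rewrite (bigD1 i) //= [X in _ < X](bigD1 i) //=.
  have hi : forall l, 1 - pm l = ((1 - pb l) + (1 - pt l)) / 2.
    by move=> l; rewrite /pm; field.
  have y0 : forall l, 0 <= 1 - pb l by move=> l; rewrite subr_ge0 pmf_le1.
  have y0' : forall l, 0 <= 1 - pt l by move=> l; rewrite subr_ge0 pmf_le1.
  apply: ltr_leD.
    rewrite hi; apply: Fu_sconv => //; last by lia.
      rewrite /pt /swp eqxx; apply/negP => /eqP h.
      by move/negP: hij; apply; apply/eqP; lra.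
    exact: ucnt_row hk hf hT.
  by apply: ler_sum => l _; rewrite hi; apply: Fu_conv.
lra.
Qed.

End Unif.

Section Mid.
Variables (R : realType) (N T : nat) (alpha : R).

Definition midmx (l0 : 'I_N) s k : 'M[bool]_(N, T) :=
  \matrix_(l, t) ~~ ((l == l0) && (s <= t < s + k)%N).

Lemma count_window s k : (s + k <= T)%N ->
  (\sum_(t < T) ((s <= t < s + k)%N : nat))%N = k.
Proof.
move=> sk.
rewrite -(big_mkord xpredT (fun t => ((s <= t < s + k)%N : nat))).
rewrite (@big_cat_nat _ _ _ s 0 T) /=; [|lia|lia].
rewrite (@big_cat_nat _ _ _ (s + k) s T) /=; [|lia|lia].
rewrite big_nat_cond big1 ?add0n; last first.
  by move=> t /andP[/andP[_ ts] _]; rewrite leqNgt ts.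
rewrite addnC big_nat_cond big1 ?add0n; last first.
  by move=> t /andP[/andP[h _] _]; rewrite ltnNge h andbF.
rewrite big_nat_cond (eq_bigr (fun _ => 1%N)); last first.
  by move=> t /andP[/andP[h1 h2] _]; rewrite h1 h2.
by rewrite -big_nat_cond sum_nat_const_nat; lia.
Qed.

Lemma feasible_mid l0 s k : alpha * T%:R = k%:R -> (s + k <= T)%N ->
  feasible alpha (midmx l0 s k).
Proof.
move=> hk sk; split.
  rewrite hk ler_nat (bigD1 l0) //=.
  have -> : (\sum_(l < N | l != l0) \sum_(t < T) (~~ midmx l0 s k l t : nat))%N = 0%N.
    by apply: big1 => l /negbTE hl; apply: big1 => t _; rewrite mxE hl.
  rewrite addn0 -[X in (_ <= X)%N](count_window sk).
  by apply: leq_sum => t _; rewrite mxE eqxx negbK.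
move=> t; rewrite -(cards1 l0); apply: subset_leq_card.
by apply/subsetP => l; rewrite !inE mxE negbK => /andP[].
Qed.

End Mid.

Lemma final_real (R : realType) (n t a e : R) : 2 <= n -> 0 < a -> a < 1 ->
  200 * n ^+ 2 < a ^+ 2 * (1 - a) * t -> 0 <= e -> e * ((1 - a) * t) <= 2 * n ->
  a * t * n - 3 * (a * t) * n * e <=
    a * t / (n^-1 + a / (4 * n)) + t / (n^-1 + a / (4 * n)) + t / (n^-1 - a / (4 * n))
    - 2 * n * t + 2 * n ^+ 2 -> False.
Proof.
move=> n2 a0 a1 hb e0 he H.
have n0 : 0 < n by lra.
have q1 : n^-1 + a / (4 * n) = (4 + a) / (4 * n) by field; lra.
have q2 : n^-1 - a / (4 * n) = (4 - a) / (4 * n) by field; lra.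
rewrite q1 q2 in H.
have t0 : 0 < t.
  have : 0 < a ^+ 2 * (1 - a) by apply: mulr_gt0; [apply: exprn_gt0|lra].
  move=> h; have : 0 < 200 * n ^+ 2 by apply: mulr_gt0; [lra|apply: exprn_gt0].
  move=> h'; have : 0 < a ^+ 2 * (1 - a) * t by lra.
  by rewrite pmulr_rgt0.
have Id : a * t / ((4 + a) / (4 * n)) + t / ((4 + a) / (4 * n)) + t / ((4 - a) / (4 * n))
    - 2 * n * t + 2 * n ^+ 2 - (a * t * n - 3 * (a * t) * n * e)
  = - (t * n * a ^+ 2 * (2 - a) / (16 - a ^+ 2)) + 3 * (a * t) * n * e + 2 * n ^+ 2.
  by field; rewrite ?mulf_neq0 // ?gt_eqF //; nra.
have H2 : 0 <= - (t * n * a ^+ 2 * (2 - a) / (16 - a ^+ 2)) + 3 * (a * t) * n * e + 2 * n ^+ 2.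
  by rewrite -Id; lra.
have H3 : t * n * a ^+ 2 / 16 <= t * n * a ^+ 2 * (2 - a) / (16 - a ^+ 2).
  have p16 : 0 < 16 - a ^+ 2 by nra.
  have X0 : 0 <= t * n * a ^+ 2 by apply: mulr_ge0; [apply: mulr_ge0; lra|apply: exprn_ge0; lra].
  have -> : t * n * a ^+ 2 * (2 - a) / (16 - a ^+ 2) = t * n * a ^+ 2 / 16 +
     t * n * a ^+ 2 * (16 - 16 * a + a ^+ 2) / (16 * (16 - a ^+ 2)).
    by field; rewrite gt_eqF.
  rewrite lerDl; apply: divr_ge0; last by apply: mulr_ge0; lra.
  apply: mulr_ge0 => //; nra.
have H4 : 3 * (a * t) * n * e * (1 - a) <= 6 * a * n ^+ 2.
  have : 3 * a * n * (e * ((1 - a) * t)) <= 3 * a * n * (2 * n).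
    by apply: ler_wpM2l => //; apply: mulr_ge0; [lra|lra].
  have -> : 3 * (a * t) * n * e * (1 - a) = 3 * a * n * (e * ((1 - a) * t)) by ring.
  lra.
have H5 : (t * n * a ^+ 2 / 16) * (1 - a) <= (3 * (a * t) * n * e + 2 * n ^+ 2) * (1 - a).
  apply: ler_wpM2r; lra.
have H6 : 12 * n ^+ 2 * n < (t * n * a ^+ 2 / 16) * (1 - a).
  have -> : (t * n * a ^+ 2 / 16) * (1 - a) = n / 16 * (a ^+ 2 * (1 - a) * t) by ring.
  have : n / 16 * (200 * n ^+ 2) < n / 16 * (a ^+ 2 * (1 - a) * t).
    by rewrite ltr_pM2l // divr_gt0.
  have -> : n / 16 * (200 * n ^+ 2) = 25 / 2 * (n ^+ 2 * n) by field.
  have : 0 < n ^+ 2 * n by apply: mulr_gt0 => //; apply: exprn_gt0.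
  lra.
have h7 : 0 <= a * n ^+ 2 by apply: mulr_ge0; [lra|apply: exprn_ge0; lra].
have h8 : 0 <= (n - 2) * n ^+ 2 by apply: mulr_ge0; [lra|apply: exprn_ge0; lra].
have h10 : 0 <= (1 - a) * n ^+ 2 by apply: mulr_ge0; [lra|apply: exprn_ge0; lra].
clear H Id q1 q2 hb.
lra.
Qed.

Section Core.
Variables (R : realType) (N T : nat) (alpha : R).

Lemma gam_up_row (y : R) (r : 'I_T -> bool) : 0 <= y < 1 ->
  (Fu y r - EE T y) * 2 <=
    (\sum_(t < T) (~~ r t : nat))%N%:R * 2 / (1 - y) +
    (\sum_(t < T) (~~ r t : nat))%N%:R * ((\sum_(t < T) (~~ r t : nat))%N%:R - 1).
Proof. by move=> yb; rewrite Fu_gam -cnt_T; apply: Gam_up. Qed.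

Lemma gam_mid_row (y : R) s k : 0 <= y < 1 -> (s + k <= T)%N -> (s.+1 <= T - s - k)%N ->
  k%:R * (k%:R - 1) + k%:R * 2 / (1 - y) - k%:R * 6 * y ^+ s.+1 / (1 - y) <=
  (Fu y (fun t : 'I_T => ~~ ((s <= t < s + k)%N)) - EE T y) * 2.
Proof.
move=> yb h1 h2; rewrite Fu_gam; apply: Gam_mid => // t tT.
by rewrite /ubf insubT.
Qed.

Lemma half_facts m : ((m./2).*2 <= m)%N /\ (m <= (m./2).*2 + 1)%N.
Proof. have := odd_double_half m; case: (odd m) => /=; lia. Qed.

Lemma no_NE_core (pb : 'I_N -> R) (sb : 'M[bool]_(N, T)) (k : nat) :
  (2 <= N)%N -> 0 < alpha -> alpha < 1 -> alpha * T%:R = k%:R ->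
  200 * N%:R ^+ 2 < alpha ^+ 2 * (1 - alpha) * T%:R ->
  nash_eq alpha pb sb -> False.
Proof.
move=> N2 a0 a1 hk hbig NE.
have [pp [hf [BR AR]]] := NE.
set n : R := N%:R.
set t : R := T%:R.
have n2 : 2 <= n by rewrite /n ler_nat.
have N0 : (0 < N)%N by lia.
have n0 : 0 < n by lra.
have hsq : 0 < n ^+ 2 by apply: exprn_gt0.
have n4 : 4 <= n ^+ 2 by rewrite expr2; nra.
have t0 : 0 <= t by rewrite /t ler0n.
have a2 : alpha ^+ 2 <= 1 by rewrite expr_le1 //; lra.
have hTk : 200 * n ^+ 2 < (1 - alpha) * t.
  have : alpha ^+ 2 * ((1 - alpha) * t) <= (1 - alpha) * t.
    rewrite ler_piMl //; apply: mulr_ge0; lra.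
  rewrite mulrA; lra.
have hk2 : 200 * n ^+ 2 < alpha * t.
  have : alpha * (1 - alpha) <= 1 by nra.
  have : alpha ^+ 2 * (1 - alpha) * t = alpha * (alpha * (1 - alpha)) * t by rewrite expr2 mulrA.
  have : 0 <= alpha * t by apply: mulr_ge0; lra.
  nra.
have hkT : (k + 3 <= T)%N.
  rewrite -(ler_nat R) natrD; rewrite -hk; lra.
have hk2n : (2 <= k)%N by rewrite -(ler_nat R) -hk; lra.
have unif := uniform_NE hk hkT N0 NE.
set l0 : 'I_N := Ordinal N0.
have pbv : forall i, pb i = n^-1.
  move=> i; case: pp => _ p1.
  have : \sum_(l < N) pb l = n * pb l0.
    by rewrite (eq_bigr (fun _ => pb l0)) ?sumr_const ?card_ord ?mulr_natl // => l _; apply: unif.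
  rewrite p1 (unif i l0) => h.
  have nz : n != 0 by rewrite gt_eqF.
  by rewrite -[pb l0](mulKf nz) -h mulr1.
set y0 : R := 1 - n^-1.
have ninv : 0 < n^-1 by rewrite invr_gt0.
have hn1 : n^-1 * n = 1 by rewrite mulVf // gt_eqF.
have ninv1 : n^-1 <= 1 by rewrite invf_le1 //; lra.
have hy0 : 0 <= y0 < 1 by apply/andP; rewrite /y0; split; lra.
have iy : forall x, x / (1 - y0) = x * n by move=> x; rewrite /y0 opprB addrC subrK invrK.
set c : R := T%:R^-1 * N%:R^-1.
have T0 : (0 < T)%N by move: hkT; clear; lia.
have c0 : 0 < c by rewrite /c; apply: mulr_gt0; rewrite invr_gt0 ltr0n.
have PF : forall sg : 'M[bool]_(N, T), payoff pb sg = c * \sum_(l < N) Fu y0 (fun t => sg l t).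
  by move=> sg; rewrite payoff_Fu //; congr (_ * _); apply: eq_bigr => l _; rewrite pbv.
have ADV : forall sg : 'M[bool]_(N, T), feasible alpha sg ->
    \sum_(l < N) Fu y0 (fun t => sg l t) <= \sum_(l < N) Fu y0 (fun t => sb l t).
  by move=> sg hsg; have := AR sg hsg; rewrite !PF ler_pM2l.
have BSR : forall p, is_pmf p ->
    \sum_(l < N) Fu y0 (fun t => sb l t) <= \sum_(l < N) Fu (1 - p l) (fun t => sb l t).
  by move=> p hp; have := BR p hp; rewrite PF payoff_Fu // ler_pM2l.
set Kl := fun l => (\sum_(t < T) (~~ sb l t : nat))%N.
have hsum : (\sum_(l < N) Kl l <= k)%N by case: hf => h _; rewrite hk ler_nat in h.
set s := (T - k).-1./2.
have [hh1 hh2] := half_facts (T - k).-1.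
have hs1 : (s + k <= T)%N by move: hh1 hh2 hkT; rewrite /s; clear; lia.
have hs2 : (s.+1 <= T - s - k)%N by move: hh1 hh2 hkT; rewrite /s; clear; lia.
have hs3 : (T - k <= (s.+1).*2)%N by move: hh1 hh2 hkT; rewrite /s; clear; lia.
set rmid := fun t : 'I_T => ~~ ((s <= t < s + k)%N).
set G := fun l => Fu y0 (fun t => sb l t) - EE T y0.
have Gmid : Fu y0 rmid - EE T y0 <= \sum_(l < N) G l.
  have H := ADV _ (feasible_mid l0 hk hs1).
  have E1 : \sum_(l < N) Fu y0 (fun t => midmx T l0 s k l t) =
      (Fu y0 rmid - EE T y0) + \sum_(l < N) EE T y0.
    rewrite (bigD1 l0) //= [X in _ = _ + X](bigD1 l0) //= addrA subrK.
    congr (_ + _); first by apply: Fu_ext => t'; rewrite mxE eqxx.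
    by apply: eq_bigr => l /negbTE hl; apply: Fu_ext => t'; rewrite mxE hl.
  have E2 : \sum_(l < N) Fu y0 (fun t => sb l t) = \sum_(l < N) G l + \sum_(l < N) EE T y0.
    by rewrite /G sumrB subrK.
  by rewrite E1 E2 lerD2r in H.
set e := y0 ^+ s.+1.
have Glow : k%:R * (k%:R - 1) + k%:R * 2 * n - k%:R * 6 * e * n <= (Fu y0 rmid - EE T y0) * 2.
  by have := gam_mid_row hy0 hs1 hs2; rewrite !iy.
have Gup : forall l, G l * 2 <= (Kl l)%:R * 2 * n + (Kl l)%:R * ((Kl l)%:R - 1).
  by move=> l; have := gam_up_row (fun t => sb l t) hy0; rewrite iy.
set Q := \sum_(l < N) (Kl l)%:R * ((Kl l)%:R - 1) : R.
have HQ : k%:R * (k%:R - 1) - k%:R * 6 * e * n <= Q.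
  have h1 : (\sum_(l < N) G l) * 2 <= \sum_(l < N) ((Kl l)%:R * 2 * n + (Kl l)%:R * ((Kl l)%:R - 1)).
    by rewrite mulr_suml; apply: ler_sum => l _; apply: Gup.
  have h1' : \sum_(l < N) (Kl l)%:R * 2 * n = (\sum_(l < N) Kl l)%N%:R * 2 * n.
    by rewrite natr_sum !mulr_suml.
  rewrite [X in _ <= X]big_split /= h1' -/Q in h1.
  have h2 : (\sum_(l < N) Kl l)%N%:R <= k%:R :> R by rewrite ler_nat.
  have h3 : (\sum_(l < N) Kl l)%N%:R * 2 * n <= k%:R * 2 * n.
    by rewrite ler_pM2r // ler_pM2r.
  clear -Gmid Glow h1 h3; lra.
have e0 : 0 <= e by rewrite exprn_ge0 //; case/andP: hy0.
have he : e * ((1 - alpha) * t) <= 2 * n.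
  have hb : e * (n - 1 + (s.+1)%:R) <= n - 1 by apply: bernoulli; clear -n2; lra.
  have hS1 : ((T - k)%N%:R : R) <= ((s.+1).*2)%:R by rewrite ler_nat.
  rewrite natrB in hS1; last by move: hkT; clear; lia.
  rewrite -muln2 natrM in hS1.
  have hS2 : (1 - alpha) * t = t - k%:R by rewrite -hk /t; ring.
  have hS : (1 - alpha) * t <= 2 * (s.+1)%:R by clear -hS1 hS2; rewrite hS2; lra.
  have h4 : e * ((1 - alpha) * t) <= e * (2 * (s.+1)%:R) by apply: ler_wpM2l.
  have h5 : 0 <= e * (n - 1) by apply: mulr_ge0 => //; clear -n2; lra.
  clear -hb h4 h5; lra.
have he1 : 6 * n * e < 1.
  have hpos : 0 < (1 - alpha) * t by clear -hTk hsq; lra.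
  have h1 : 6 * n * (e * ((1 - alpha) * t)) <= 6 * n * (2 * n).
    by apply: ler_wpM2l => //; clear -n0; lra.
  have h2 : 12 * (n * n) < (1 - alpha) * t by rewrite -expr2; clear -hTk hsq; lra.
  rewrite -(ltr_pM2r hpos) mul1r; clear -h1 h2; lra.
have kpos : 0 < k%:R :> R by rewrite ltr0n; move: hk2n; clear; lia.
have [b hb] : exists b, (k <= Kl b)%N.
  case: (pickP (fun l => k <= Kl l)%N) => [b hb | hnone]; first by exists b.
  exfalso.
  have hQ : Q <= (k%:R - 2) * k%:R.
    have h1 : Q <= \sum_(l < N) (Kl l)%:R * (k%:R - 2).
      apply: ler_sum => l _.
      have hl : (Kl l < k)%N by rewrite ltnNge hnone.
      have hl' : (Kl l)%:R + 1 <= k%:R :> R by rewrite natr1 ler_nat.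
      rewrite -subr_ge0 -mulrBr; apply: mulr_ge0; first by rewrite ler0n.
      clear -hl'; lra.
    apply: (le_trans h1); rewrite -mulr_suml -natr_sum mulrC.
    apply: ler_wpM2l; first by rewrite subr_ge0 ler_nat.
    by rewrite ler_nat.
  have h6 : 0 < k%:R * (1 - 6 * n * e) by apply: mulr_gt0 => //; clear -he1; lra.
  clear -HQ hQ h6; lra.
have hsum' := hsum; rewrite (bigD1 b) //= in hsum'.
have hKb : Kl b = k by move: hsum' hb; clear; lia.
have hz : (\sum_(l < N | l != b) Kl l == 0)%N.
  by rewrite -leqn0 -(leq_add2l (Kl b)) addn0; exact: leq_trans hsum' hb.
have hothers : forall l, l != b -> forall t, sb l t.
  move=> l hl t0'; move: hz; rewrite sum_nat_eq0 => /forallP /(_ l); rewrite hl /= => /eqP.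
  rewrite /Kl => /eqP; rewrite sum_nat_eq0 => /forallP /(_ t0') /=.
  by case: (sb l t0').
have Gz : forall l, l != b -> G l = 0.
  move=> l hl; rewrite /G; apply/eqP; rewrite subr_eq0; apply/eqP; apply: Fu_ext => t'; exact: hothers.
have Gb : \sum_(l < N) G l = G b.
  by rewrite (bigD1 b) //= big1 ?addr0 // => l; apply: Gz.
have Gb2 : k%:R * (k%:R - 1) + k%:R * 2 * n - k%:R * 6 * e * n <= G b * 2.
  apply: (le_trans Glow); rewrite ler_pM2r // -Gb //.
have [cc hcb] : exists c : 'I_N, c != b.
  case: (eqVneq b l0) => hb0; last by exists l0; rewrite eq_sym.
  by exists (Ordinal N2); rewrite hb0; apply/eqP => /(congr1 val).
have nhalf : n^-1 <= 2^-1.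
  have h1 : n^-1 * 1 <= n^-1 * (n / 2) by apply: ler_wpM2l; [exact: ltW | clear -n2; lra].
  have h2 : n^-1 * (n / 2) = 2^-1 by field; rewrite gt_eqF.
  by rewrite mulr1 h2 in h1.
set h : R := alpha / (4 * n).
have hpos : 0 < h by rewrite /h divr_gt0 // mulr_gt0 //; clear -n0; lra.
have hlt : h <= n^-1 / 4.
  rewrite /h; have -> : alpha / (4 * n) = alpha * (n^-1 / 4) by field; rewrite gt_eqF.
  apply: ler_piMl; [apply: divr_ge0; [exact: ltW | by []] | clear -a1; lra].
set p' := fun l => if l == b then n^-1 + h else if l == cc then n^-1 - h else n^-1.
have pp' : is_pmf p'.
  split.
    move=> l; rewrite /p'; case: (l == b); first by clear -ninv hpos; lra.
    case: (l == cc); clear -ninv hpos hlt; lra.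
  have -> : \sum_(l < N) p' l = \sum_(l < N) n^-1 + \sum_(l < N) (p' l - n^-1).
    by rewrite -big_split /=; apply: eq_bigr => l _; rewrite addrC subrK.
  rewrite sumr_const card_ord -mulr_natl -/n mulfV ?gt_eqF //.
  rewrite (bigD1 b) //= (bigD1 cc) //= big1 ?addr0.
    by rewrite /p' eqxx (negbTE hcb) eqxx; ring.
  by move=> l /andP[lb lc]; rewrite /p' (negbTE lb) (negbTE lc) subrr.
set rb := fun t : 'I_T => sb b t.
have D : \sum_(l < N) (Fu (1 - p' l) (fun t => sb l t) - Fu y0 (fun t => sb l t)) =
    (Fu (y0 - h) rb - Fu y0 rb) + (EE T (y0 + h) - EE T y0).
  rewrite (bigD1 b) //= (bigD1 cc) //= big1 ?addr0.
    rewrite /p' eqxx (negbTE hcb) eqxx.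
    have -> : 1 - (n^-1 + h) = y0 - h by rewrite /y0; ring.
    have -> : 1 - (n^-1 - h) = y0 + h by rewrite /y0; ring.
    by rewrite !(Fu_ext _ (hothers cc hcb)).
  move=> l /andP[lb lc]; rewrite /p' (negbTE lb) (negbTE lc) subrr //.
have BS := BSR p' pp'.
rewrite -subr_ge0 -sumrB D in BS.
have hyh : 0 <= y0 - h < 1.
  by apply/andP; split; rewrite /y0; clear -nhalf hlt hpos; lra.
have hyh' : 0 <= y0 + h < 1.
  by apply/andP; split; rewrite /y0; clear -ninv1 hlt hpos ninv; lra.
have Up := gam_up_row rb hyh.
have hrb : (\sum_(t < T) (~~ rb t : nat))%N = k by rewrite -hKb.
rewrite hrb in Up.
have e1 : 1 - (y0 - h) = n^-1 + h by rewrite /y0; ring.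
have e2 : 1 - (y0 + h) = n^-1 - h by rewrite /y0; ring.
rewrite e1 in Up.
have [EB1 _] := EE_bounds T hyh.
have [EB2 _] := EE_bounds T hyh'.
have [_ EB3] := EE_bounds T hy0.
rewrite e1 in EB1; rewrite e2 in EB2.
have q1 : 0 < n^-1 + h by clear -ninv hpos; lra.
have q2 : 0 < n^-1 - h by clear -ninv hpos hlt; lra.
have EB1' : EE T (y0 - h) <= t / (n^-1 + h) by rewrite mulrC ler_pdivlMl.
have EB2' : EE T (y0 + h) <= t / (n^-1 - h) by rewrite mulrC ler_pdivlMl.
have EB3' : n * t - n ^+ 2 <= EE T y0.
  have hiy : 1 - y0 = n^-1 by rewrite /y0; ring.
  rewrite iy mul1r hiy in EB3.
  have := ler_wpM2l (ltW n0) EB3.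
  rewrite mulrA mulfV ?gt_eqF // mul1r mulrBr expr2 //.
have GbE : Fu y0 rb = G b + EE T y0 by rewrite /G subrK.
apply: (final_real n2 a0 a1 _ e0 he).
  by rewrite -/n -/t.
rewrite -/h.
have Hk : alpha * t = k%:R by [].
rewrite Hk.
clear -BS GbE Gb2 Up EB1' EB2' EB3'.
rewrite GbE in BS.
lra.
Qed.

End Core.

Unset Implicit Arguments.

Theorem theorem6 (R : realType) (N : nat) (alpha : R) :
  (2 <= N)%N -> 0 < alpha -> alpha < 1 ->
  exists T0 : nat, forall T : nat, (T0 <= T)%N ->
    (exists k : nat, alpha * T%:R = k%:R) ->
    ~ exists (pb : 'I_N -> R) (sb : 'M[bool]_(N, T)), nash_eq alpha pb sb.
Proof.
move=> N2 a0 a1.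
have d0 : 0 < alpha ^+ 2 * (1 - alpha).
  by apply: mulr_gt0; [apply: exprn_gt0 | rewrite subr_gt0].
set B : R := 200 * N%:R ^+ 2 / (alpha ^+ 2 * (1 - alpha)).
have B0 : 0 <= B.
  by rewrite /B; apply: divr_ge0; [apply: mulr_ge0; [by [] | apply: exprn_ge0] | exact: ltW].
exists (Num.Def.archi_bound B) => T hT [k hk] [pb [sb NE]].
apply: (no_NE_core N2 a0 a1 hk _ NE).
have hB : B < T%:R.
  apply: (lt_le_trans (archi_boundP B0)); by rewrite ler_nat.
rewrite /B ltr_pdivrMr // in hB.
by move: hB; rewrite [T%:R * _]mulrC.
Qed.
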